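(* For every $\lambda$ in $$\Omega=\{\lambda\in\mathbb D:\ \mathrm{Re}(\lambda)\ge0,\ \mathrm{Im}(\lambda)\ge0\}\setminus B_{\sqrt3/2}(1/2)=\{\lambda\in\mathbb D:\ 0\le\mathrm{Re}(\lambda)\le|\lambda|^2-\tfrac12\},$$ the set $A_\lambda$ has non-empty interior.
   Context: $\mathbb D$ is the open unit disc; $B_r(z_0)$ is the open disc of radius $r$ centered at $z_0$. $A_\lambda=\{\sum_{n\ge0}a_n\lambda^n:a_n\in\{-1,1\}\}$, the attractor of the iterated function system $\{\lambda z-1,\lambda z+1\}$. *)

(* Defs.v *)
From Stdlib Require Import Reals.
From Coquelicot Require Import Coquelicot.
Open Scope R_scope.

Definition A_lambda (lam : C) : C -> Prop :=
  fun z => exists a : nat -> R,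
    (forall n, a n = 1 \/ a n = -1) /\
    is_series (fun n => Cmult (RtoC (a n)) (Cpow lam n)) z.

Definition open_disc (z0 : C) (r : R) : C -> Prop :=
  fun z => Cmod (Cminus z z0) < r.

Definition Omega : C -> Prop :=
  fun lam => open_disc (RtoC 0) 1 lam /\ 0 <= Re lam /\ 0 <= Im lam /\
             ~ open_disc (RtoC (1/2)) (sqrt 3 / 2) lam.

Definition has_nonempty_interior (S : C -> Prop) : Prop :=
  exists z0 : C, exists r : R, 0 < r /\ forall z, open_disc z0 r z -> S z.

(* Main.v *)
Require Import Defs.
From Stdlib Require Import Reals Lra Psatz Classical ClassicalEpsilon.
From Coquelicot Require Import Coquelicot.
Open Scope R_scope.

Lemma aux_minus (x y : C) : Cminus x (Cplus x y) = Copp y.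
Proof. ring. Qed.

Lemma cover (lam : C) (K : C -> Prop) (M : R) :
  Cmod lam < 1 ->
  (forall z, K z -> Cmod z <= M) ->
  (forall z, K z -> exists s w, (s = 1 \/ s = -1) /\ K w /\ z = Cplus (RtoC s) (Cmult lam w)) ->
  forall z, K z -> A_lambda lam z.
Proof.
intros Hl HM Hs z Kz.
assert (g : forall u : C, {p : R * C | K u -> (fst p = 1 \/ fst p = -1) /\ K (snd p) /\ u = Cplus (RtoC (fst p)) (Cmult lam (snd p))}).
{ intro u. apply constructive_indefinite_description.
  destruct (classic (K u)) as [Ku|nKu].
  - destruct (Hs u Ku) as [s [w [H1 [H2 H3]]]]. exists (s, w). intros _. simpl; auto.
  - exists (1, RtoC 0). intro; contradiction. }
set (w := fix w n := match n with O => z | S n => snd (proj1_sig (g (w n))) end).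
set (a := fun n => fst (proj1_sig (g (w n)))).
assert (Kw : forall n, K (w n)).
{ induction n. exact Kz. simpl. destruct (g (w n)) as [p Hp]. simpl. apply Hp; auto. }
assert (Hw : forall n, (a n = 1 \/ a n = -1) /\ w n = Cplus (RtoC (a n)) (Cmult lam (w (S n)))).
{ intro n. unfold a. simpl. destruct (g (w n)) as [p Hp]. simpl. destruct (Hp (Kw n)) as [H1 [H2 H3]]. auto. }
exists a. split. intro n; apply Hw.
assert (Hid : forall n, Cplus (sum_n (fun n => Cmult (RtoC (a n)) (Cpow lam n)) n) (Cmult (Cpow lam (S n)) (w (S n))) = z).
{ induction n.
  - rewrite sum_O. destruct (Hw 0%nat) as [_ E]. change (w 0%nat) with z in E. rewrite E. simpl. ring.
  - rewrite sum_Sn. rewrite <- IHn. destruct (Hw (S n)) as [_ E]. rewrite E. change (plus ?x ?y) with (Cplus x y). simpl. ring. }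
assert (M0 : 0 <= M). { apply Rle_trans with (Cmod z). apply Cmod_ge_0. auto. }
clearbody a w.
intros P [eps HP].
assert (Heps : 0 < eps / (M + 1)). { apply Rdiv_lt_0_compat. apply cond_pos. lra. }
destruct (pow_lt_1_zero (Cmod lam) ltac:(rewrite Rabs_pos_eq; auto; apply Cmod_ge_0) _ Heps) as [N HN].
exists N. intros n Hn. apply HP. apply norm_compat1.
change (norm (minus ?x ?y)) with (Cmod (Cminus x y)).
rewrite <- (Hid n).
rewrite aux_minus.
rewrite Cmod_opp, Cmod_mult, Cmod_pow.
assert (h := HN (S n) ltac:(lia)). rewrite Rabs_pos_eq in h by (apply pow_le; apply Cmod_ge_0).
assert (hw := HM _ (Kw (S n))).
assert (0 <= Cmod lam ^ S n) by (apply pow_le; apply Cmod_ge_0).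
apply Rle_lt_trans with (Cmod lam ^ S n * M). apply Rmult_le_compat_l; auto.
apply Rle_lt_trans with (eps / (M+1) * M). apply Rmult_le_compat_r; lra.
assert (0 < eps) by apply cond_pos.
apply Rmult_lt_reg_r with (M+1). lra. replace (eps / (M + 1) * M * (M + 1)) with (eps * M) by (field; lra). nra.
Qed.

Theorem mainTheorem11 : forall lam : C, Omega lam -> has_nonempty_interior (A_lambda lam).
Proof.
intros [a b] [H1 [Ha [Hb H4]]]. simpl in Ha, Hb. unfold open_disc in H1, H4.
assert (E1 : Cmod (Cminus (a,b) (RtoC 0)) ^ 2 = a^2 + b^2) by (rewrite Cmod2_alt; simpl; ring).
assert (E2 : Cmod (Cminus (a,b) (RtoC (1/2))) ^ 2 = (a - 1/2)^2 + b^2) by (rewrite Cmod2_alt; simpl; field).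
assert (C1 := Cmod_ge_0 (Cminus (a,b) (RtoC 0))).
assert (C2 := Cmod_ge_0 (Cminus (a,b) (RtoC (1/2)))).
assert (S3 : sqrt 3 ^ 2 = 3) by (simpl; rewrite Rmult_1_r; apply sqrt_sqrt; lra).
assert (S0 : 0 <= sqrt 3) by apply sqrt_pos.
apply Rnot_lt_le in H4.
assert (Hr1 : a^2 + b^2 < 1) by nra.
assert (Hom : (a - 1/2)^2 + b^2 >= 3/4) by nra.
assert (Hbp : 0 < b).
{ destruct Hb as [Hb|Hb]; auto. subst b. nra. }
assert (Hcond : 1 + 2*a <= 2*(a*a+b*b)) by nra.
set (r2 := a*a+b*b) in *.
assert (r2p : 0 < r2) by (unfold r2; nra).
set (c := / r2).
assert (cr : c * r2 = 1) by (unfold c; field; lra).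
assert (cp : 0 < c) by (unfold c; apply Rinv_0_lt_compat; lra).
assert (bb : b * / b = 1) by (field; lra).
assert (bip : 0 < / b) by (apply Rinv_0_lt_compat; lra).
set (K := fun z : C => -2 <= fst z - a * (snd z * / b) <= 2 /\ -c <= snd z * / b <= c).
assert (Hcov : forall z, K z -> A_lambda (a,b) z).
{ apply (cover (a,b) K (2 + c*(a+b))).
  - assert (Cmod (a,b) ^ 2 = a^2+b^2) by (rewrite Cmod2_alt; simpl; ring).
    assert (0 <= Cmod (a,b)) by apply Cmod_ge_0. nra.
  - intros [zr zi] [Hx Hy]. simpl in Hx, Hy.
    set (y := zi * / b) in *. set (x := zr - a * y) in *.
    assert (Ezr : zr = x + a * y) by (unfold x; ring).
    assert (Ezi : zi = b * y) by (unfold y; field; lra).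
    assert (B1 : -(2 + a*c) <= zr <= 2 + a*c) by (rewrite Ezr; split; nra).
    assert (B2 : -(b*c) <= zi <= b*c) by (rewrite Ezi; split; nra).
    assert (Cmod (zr,zi) ^ 2 = zr^2 + zi^2) by (rewrite Cmod2_alt; simpl; ring).
    assert (0 <= Cmod (zr,zi)) by apply Cmod_ge_0.
    assert (0 <= a*c) by nra. assert (0 <= b*c) by nra.
    assert (zr^2 <= (2+a*c)^2) by nra. assert (zi^2 <= (b*c)^2) by nra.
    nra.
  - intros [zr zi] [Hx Hy]. simpl in Hx, Hy.
    set (y := zi * / b) in *. set (x := zr - a * y) in *.
    assert (Ezr : zr = x + a * y) by (unfold x; ring).
    assert (Ezi : zi = b * y) by (unfold y; field; lra).
    assert (St : forall s, (s = 1 \/ s = -1) -> -1 <= s - x <= 1 ->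
      exists s0 w, (s0 = 1 \/ s0 = -1) /\ K w /\ (zr, zi) = Cplus (RtoC s0) (Cmult (a,b) w)).
    { intros s Hs Hsx. set (y' := (s - x) * c). set (x' := y - 2*a*y').
      exists s, (x' + a*y', b*y'). split; auto. split.
      - unfold K; simpl.
        replace (b * y' * / b) with y' by (field; lra).
        replace (x' + a * y' - a * y') with x' by ring.
        assert (-c <= y' <= c) by (unfold y'; split; nra).
        assert (Habs : -(c*(1+2*a)) <= x' <= c*(1+2*a)).
        { unfold x'. split; nra. }
        assert (c * (1+2*a) <= 2) by nra.
        split; split; lra.
      - unfold Cplus, Cmult, RtoC; simpl. f_equal.
        + rewrite Ezr. unfold x', y'. unfold c. field_simplify; [|lra]. unfold r2. field. lra.
        + rewrite Ezi. unfold x', y'. ring. }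
    destruct (Rle_lt_dec 0 x).
    + apply (St 1); [left; reflexivity | lra].
    + apply (St (-1)); [right; reflexivity | lra]. }
exists (RtoC 0), (b/2). split. lra.
intros z Hz. apply Hcov. unfold open_disc in Hz.
replace (Cminus z (RtoC 0)) with z in Hz by ring.
assert (Hm := Rmax_Cmod z).
assert (Hr : Rabs (fst z) < b/2) by (eapply Rle_lt_trans; [apply Rmax_l|]; eapply Rle_lt_trans; eauto).
assert (Hi : Rabs (snd z) < b/2) by (eapply Rle_lt_trans; [apply Rmax_r|]; eapply Rle_lt_trans; eauto).
apply Rabs_def2 in Hr. apply Rabs_def2 in Hi.
assert (r2 < 1) by (unfold r2; nra). assert (c > 1) by nra.
assert (Hy : -(1/2) <= snd z * / b <= 1/2).
{ split; apply Rmult_le_reg_r with b; try lra; rewrite Rmult_assoc, (Rmult_comm (/b)), bb; lra. }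
assert (a < 1) by nra. assert (b < 1) by nra.
unfold K. split; split; nra.
Qed.
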